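(* Let $E$ be an Adams connected, strictly unital $A_\infty$-algebra (with Adams grading), whose unit spans the summand $k=E^0_0$. (a) If $E\cong k\oplus E^1_{-1}\oplus(E^2_{-3}\oplus E^2_{-4})\oplus E^3_{-6}\oplus E^4_{-7}$ as a $\mathbb{Z}^2$-graded vector space, then $m_n=0$ for $n\ne2,3,4$. (b) If $E\cong k\oplus E^1_{-1}\oplus(E^2_{-2}\oplus E^2_{-3})\oplus E^3_{-4}\oplus E^4_{-5}$, then $m_n=0$ for $n\neq2,3$. (c) If $E\cong k\oplus E^1_{-1}\oplus E^2_{-2}\oplus E^3_{-3}\oplus E^4_{-4}$, then $m_n=0$ for $n\ne2$.
   Context: An $A_\infty$-algebra with Adams grading over a field $k$ is a bigraded vector space $E=\bigoplus_{p\in\mathbb{Z},i\in\mathbb{Z}}E^p_i$ with $k$-linear maps $m_n:E^{\otimes n}\to E$ ($n\ge1$) of bidegree $(2-n,0)$ satisfying, for all $n\ge1$, the Stasheff identities $\sum(-1)^{r+st}m_{r+1+t}(\mathrm{id}^{\otimes r}\otimes m_s\otimes\mathrm{id}^{\otimes t})=0$, the sum over $n=r+s+t$ with $r,t\ge0$, $s\ge1$ (Koszul sign rule applies on elements). It is strictly unital if it has an element $1$ that is a unit for $m_2$ and $m_n(a_1,\dots,a_n)=0$ for $n\neq2$ whenever some $a_i=1$. Writing $E_i=\bigoplus_pE^p_i$, $E$ is Adams connected if $E_0=k$, either $E=\bigoplus_{i\ge0}E_i$ or $E=\bigoplus_{i\le0}E_i$, and each $E_i$ is finite-dimensional. *)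

(* Defs.v *)
From HB Require Import structures.
From mathcomp Require Import all_boot all_order all_algebra.
Set Implicit Arguments. Unset Strict Implicit. Unset Printing Implicit Defensive.
Import Order.TTheory GRing.Theory Num.Theory.
Local Open Scope ring_scope.

(* A Z^2-graded k-vector space E = (+)_{p,i} E^p_i is modelled as a k-vector
   space V (the total space) together with a family of subspaces
   G p i = E^p_i (p = cohomological degree, i = Adams degree) such that V is
   their internal direct sum.
   The family (m_n)_{n>=1}, m_n : E^{(x)n} -> E, is modelled by one function
   m : seq V -> V, where m_n is the restriction of m to lists of length n
   (a linear map on E^{(x)n} is the same as a multilinear map on E^n).
   m [::] is unused junk. *)

Section Defs.
Variables (k : fieldType) (V : lmodType k).

Definition bigraded_decomp (G : int -> int -> V -> Prop) : Prop :=
  (forall p i, G p i 0 /\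
     (forall (a : k) (x y : V), G p i x -> G p i y -> G p i (a *: x + y))) /\
  (forall x : V, exists (s : seq (int * int)) (c : int * int -> V),
      (forall d, G d.1 d.2 (c d)) /\ x = \sum_(d <- s) c d) /\
  (forall (s : seq (int * int)) (c : int * int -> V),
      uniq s -> (forall d, G d.1 d.2 (c d)) -> \sum_(d <- s) c d = 0 ->
      forall d, d \in s -> c d = 0).

Definition multilinear (m : seq V -> V) : Prop :=
  forall (a b : seq V) (c : k) (u v : V),
    m (a ++ (c *: u + v) :: b) = c *: m (a ++ u :: b) + m (a ++ v :: b).

Definition homogeneous (G : int -> int -> V -> Prop)
    (xs : seq V) (ds : seq (int * int)) : Prop :=
  size ds = size xs /\
  forall j, (j < size xs)%N ->
    G (nth (0, 0) ds j).1 (nth (0, 0) ds j).2 (nth 0 xs j).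

Definition graded_mult (G : int -> int -> V -> Prop) (m : seq V -> V) : Prop :=
  forall xs ds, (0 < size xs)%N -> homogeneous G xs ds ->
    G (\sum_(d <- ds) d.1 + 2 - (size xs)%:Z) (\sum_(d <- ds) d.2) (m xs).

(* Left-hand side of the n-th Stasheff identity evaluated on a homogeneous
   tensor x_1 (x) ... (x) x_n (n = size xs), with x_j of bidegree ds_j:
   sum over n = r + s + t, s >= 1, of
   (-1)^(r + s t) m_{r+1+t}(id^r (x) m_s (x) id^t)(x_1 (x) ... (x) x_n),
   where the Koszul rule gives the extra sign (-1)^{(2-s)(|x_1|+...+|x_r|)},
   |x_j| being the cohomological degree (first coordinate). *)
Definition stasheff_lhs (m : seq V -> V) (xs : seq V) (ds : seq (int * int))
    : V :=
  let n := size xs in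
  \sum_(r < n.+1) \sum_(s < n.+1 | (0 < s)%N && (r + s <= n)%N)
     let P : int := \sum_(d <- take r ds) d.1 in
     ((-1) ^+ (r + s * (n - r - s) + s * absz P)%N)
       *: m (take r xs ++ m (take s (drop r xs)) :: drop (r + s) xs).

Definition stasheff (G : int -> int -> V -> Prop) (m : seq V -> V) : Prop :=
  forall xs ds, (0 < size xs)%N -> homogeneous G xs ds ->
    stasheff_lhs m xs ds = 0.

Definition Ainf_algebra (G : int -> int -> V -> Prop) (m : seq V -> V) : Prop :=
  [/\ bigraded_decomp G, multilinear m, graded_mult G m & stasheff G m].

Definition strictly_unital (G : int -> int -> V -> Prop) (m : seq V -> V)
    (one : V) : Prop :=
  [/\ G 0 0 one,
      forall x, m [:: one; x] = x /\ m [:: x; one] = x &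
      forall xs, size xs <> 2%N -> one \in xs -> m xs = 0].

Definition in_adams (G : int -> int -> V -> Prop) (i : int) (x : V) : Prop :=
  exists (s : seq int) (c : int -> V), (forall p, G p i (c p)) /\
    x = \sum_(p <- s) c p.

Definition adams_connected (G : int -> int -> V -> Prop) (one : V) : Prop :=
  [/\ (forall p x, p <> 0 -> G p 0 x -> x = 0),
      one != 0 /\ (forall x, G 0 0 x -> exists c : k, x = c *: one),
      (forall p i x, 0 < i -> G p i x -> x = 0) \/
      (forall p i x, i < 0 -> G p i x -> x = 0) &
      forall i, exists b : seq V, forall x, in_adams G i x ->
        exists a : 'I_(size b) -> k, x = \sum_(j < size b) a j *: b`_j].

Definition supported_in (G : int -> int -> V -> Prop) (S : seq (int * int))
    : Prop :=
  forall p i x, (p, i) \notin S -> G p i x -> x = 0.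

Definition mult_vanish_outside (m : seq V -> V) (N : seq nat) : Prop :=
  forall xs : seq V, (0 < size xs)%N -> size xs \notin N -> m xs = 0.

End Defs.

(* Main.v *)
Require Import Defs.
From HB Require Import structures.
From mathcomp Require Import all_boot all_order all_algebra.
From mathcomp Require Import zify.
Import Order.TTheory GRing.Theory Num.Theory.
Local Open Scope ring_scope.

Section Aux.
Variables (k : fieldType) (V : lmodType k).
Variables (G : int -> int -> V -> Prop) (m : seq V -> V).

Lemma m_zero_arg : multilinear m -> forall a b, m (a ++ 0 :: b) = 0.
Proof.
move=> ml a b; have := ml a b 1 0 0; rewrite !scale1r addr0 => h.
by apply: (addrI (m (a ++ 0 :: b))); rewrite addr0 -h.
Qed.

Lemma m_sum : multilinear m -> forall a b (s : seq (int * int)) (c : int * int -> V),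
  m (a ++ (\sum_(d <- s) c d) :: b) = \sum_(d <- s) m (a ++ c d :: b).
Proof.
move=> ml a b s c; elim: s => [|d s IH]; first by rewrite !big_nil m_zero_arg.
have := ml a b 1 (c d) (\sum_(d <- s) c d); rewrite !scale1r big_cons => ->; by rewrite big_cons IH.
Qed.

Lemma reduce : bigraded_decomp G -> multilinear m -> forall a b,
  (forall u p i, G p i u -> m (a ++ u :: b) = 0) -> forall x, m (a ++ x :: b) = 0.
Proof.
move=> [_ [dec _]] ml a b H x; have [s [c [Hc ->]]] := dec x.
rewrite m_sum //; apply: big1 => d _; exact: (H _ _ _ (Hc d)).
Qed.

Lemma generic (S : seq (int * int)) (N : seq nat) :
  Ainf_algebra G m -> supported_in G S ->
  (forall ds : seq (int * int), all (fun d => d \in S) ds -> (0 < size ds)%N ->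
     size ds \notin N ->
     (\sum_(d <- ds) d.1 + 2 - (size ds)%:Z, \sum_(d <- ds) d.2) \notin S) ->
  mult_vanish_outside m N.
Proof.
move=> [bd ml gm _] sup arith xs xs0 xsN.
set n := size xs in xsN.
have Hh : forall ys ds, size ys = n -> homogeneous G ys ds ->
    all (fun d => d \in S) ds -> m ys = 0.
  move=> ys ds sz hom hall; apply: (sup _ _ _ _ (gm ys ds _ hom)).
  - rewrite -hom.1; apply: arith => //; rewrite hom.1 sz //.
  - by rewrite sz.
have main : forall b a ds, homogeneous G a ds -> all (fun d => d \in S) ds ->
    (size a + size b)%N = n -> m (a ++ b) = 0.
  elim=> [|x b IH] a ds hom hall sz.
    by rewrite cats0; apply: (Hh a ds) => //; rewrite -sz addn0.
  apply: (reduce bd ml) => u p i Gu.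
  case hin: ((p, i) \in S); last first.
    by rewrite (sup p i u _ Gu) ?hin // m_zero_arg.
  rewrite -cat_rcons; apply: (IH _ (rcons ds (p, i))).
  - split; first by rewrite !size_rcons hom.1.
    move=> j; rewrite size_rcons ltnS leq_eqVlt => /orP [/eqP ->|lt].
      by rewrite !nth_rcons hom.1 ltnn eqxx.
    by rewrite !nth_rcons hom.1 lt; apply: hom.2.
  - by rewrite all_rcons hin.
  - by rewrite size_rcons addSn -sz addnS.
by apply: (main xs [::] [::]) => //; split => // j.
Qed.

Lemma lin_bound (S : seq (int * int)) (a b c : int) (ds : seq (int * int)) :
  (forall d, d \in S -> a * d.1 + b * d.2 <= c) -> all (fun d => d \in S) ds ->
  a * (\sum_(d <- ds) d.1) + b * (\sum_(d <- ds) d.2) <= c * (size ds)%:Z.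
Proof.
move=> H; elim: ds => [|d ds IH]; first by rewrite !big_nil !mulr0 addr0.
rewrite /= => /andP [hd hds]; have := H d hd; have := IH hds.
rewrite !big_cons !mulrDr.
have -> : ((size ds).+1 : int) = 1 + (size ds)%:Z by rewrite -addn1 PoszD addrC.
rewrite mulrDr mulr1 addrACA => h1 h2; exact: lerD.
Qed.

End Aux.

Lemma single_sum (d : int * int) (f : int * int -> int) :
  \sum_(e <- [:: d]) f e = f d.
Proof. by rewrite big_seq1. Qed.

Theorem lemma3p2 (k : fieldType) (V : lmodType k)
    (G : int -> int -> V -> Prop) (m : seq V -> V) (one : V) :
  Ainf_algebra G m -> strictly_unital G m one -> adams_connected G one ->
  [/\ supported_in G [:: (0, 0); (1, -1); (2, -3); (2, -4); (3, -6); (4, -7)] ->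
        mult_vanish_outside m [:: 2; 3; 4]%N,
      supported_in G [:: (0, 0); (1, -1); (2, -2); (2, -3); (3, -4); (4, -5)] ->
        mult_vanish_outside m [:: 2; 3]%N &
      supported_in G [:: (0, 0); (1, -1); (2, -2); (3, -3); (4, -4)] ->
        mult_vanish_outside m [:: 2]%N].
Proof.
move=> HA _ _; split=> sup; apply: (@generic _ _ G m _ _ HA sup) => ds hall sz0 szN.
- case: ds hall sz0 szN => [|d [|d' ds]] //.
    rewrite /= andbT => hd _ _; rewrite !single_sum /=.
    move: d hd; apply/allP; by vm_compute.
  move=> hall _ szN.
  have H1 : forall d : int * int, d \in [:: (0, 0); (1, -1); (2, -3); (2, -4); (3, -6); (4, -7)] ->
      2 * d.1 + 1 * d.2 <= 1.
    apply/allP; by vm_compute.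
  have hb := @lin_bound _ 2 1 1 _ H1 hall.
  rewrite mul1r mul1r in hb.
  have H2 : forall o : int * int, o \in [:: (0, 0); (1, -1); (2, -3); (2, -4); (3, -6); (4, -7)] ->
      0 <= 2 * o.1 + o.2.
    apply/allP; by vm_compute.
  apply/negP => /H2 /=.
  move: szN hb; rewrite /= !inE.
  move: (\sum_(d0 <- [:: d, d' & ds]) d0.1) (\sum_(d0 <- [:: d, d' & ds]) d0.2) (size ds) => P I n.
  lia.
- case: ds hall sz0 szN => [|d [|d' ds]] //.
    rewrite /= andbT => hd _ _; rewrite !single_sum /=.
    move: d hd; apply/allP; by vm_compute.
  move=> hall _ szN.
  have H0 : forall d : int * int, d \in [:: (0, 0); (1, -1); (2, -2); (2, -3); (3, -4); (4, -5)] ->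
      1 * d.1 + 1 * d.2 <= 0.
    apply/allP; by vm_compute.
  have hb0 := @lin_bound _ (1) (1) (0) _ H0 hall.
  have Ho : forall o : int * int, o \in [:: (0, 0); (1, -1); (2, -2); (2, -3); (3, -4); (4, -5)] -> (- o.1 - o.2 <= 1).
    apply/allP; by vm_compute.
  apply/negP => /Ho /=.
  move: szN hb0; rewrite /= !inE.
  move: (\sum_(d0 <- [:: d, d' & ds]) d0.1) (\sum_(d0 <- [:: d, d' & ds]) d0.2) (size ds) => P I n.
  lia.
- case: ds hall sz0 szN => [|d [|d' ds]] //.
    rewrite /= andbT => hd _ _; rewrite !single_sum /=.
    move: d hd; apply/allP; by vm_compute.
  move=> hall _ szN.
  have H0 : forall d : int * int, d \in [:: (0, 0); (1, -1); (2, -2); (3, -3); (4, -4)] ->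
      1 * d.1 + 1 * d.2 <= 0.
    apply/allP; by vm_compute.
  have hb0 := @lin_bound _ (1) (1) (0) _ H0 hall.
  have H1 : forall d : int * int, d \in [:: (0, 0); (1, -1); (2, -2); (3, -3); (4, -4)] ->
      -1 * d.1 + -1 * d.2 <= 0.
    apply/allP; by vm_compute.
  have hb1 := @lin_bound _ (-1) (-1) (0) _ H1 hall.
  have Ho : forall o : int * int, o \in [:: (0, 0); (1, -1); (2, -2); (3, -3); (4, -4)] -> (o.1 + o.2 == 0).
    apply/allP; by vm_compute.
  apply/negP => /Ho /=.
  move: szN hb0 hb1; rewrite /= !inE.
  move: (\sum_(d0 <- [:: d, d' & ds]) d0.1) (\sum_(d0 <- [:: d, d' & ds]) d0.2) (size ds) => P I n.
  lia.
Qed.
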